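(* Let $K$ be a field of characteristic $0$ or $>n$, $P=K[v_1,\dots,v_n]$, let $u\in P$ be homogeneous of degree $d$, and let $r\ge1$. There is a polynomial $R^{u,r}$ in the indeterminates $a^{(i)}_J$, homogeneous of degree $rd$ with respect to the auxiliary grading, such that for every choice of values $a^{(i)}_J\in K$ the $r$-th coefficient of the characteristic polynomial of $\mathrm{mult}_u$ (the sum of the principal $r\times r$ minors of a matrix representing it) equals $T^{rd}R^{u,r}(a)$. In particular $\mathrm{Tr}(\mathrm{mult}_u)=T^dR^{u,1}$.
   Context: $e_i$ is the $i$-th elementary symmetric polynomial in $v_1,\dots,v_n$. For $1\le i\le n$ and $J\subseteq[n]$ with $|J|\le i-1$, $a^{(i)}_J$ has auxiliary degree $i-|J|$. With $v^J=\prod_{j\in J}v_j$ and a new variable $T$, put $g_i^H=\sum_{|J|\le i-1}a^{(i)}_Jv^JT^{i-|J|}$ and $E^H=(e_1+g_1^H,\dots,e_n+g_n^H)\subseteq P[T]$. $P[T]/E^H$ is a free $K[T]$-module of rank $n!$, and $\mathrm{mult}_u$ is the $K[T]$-linear endomorphism $p\mapsto up$ of it. *)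

(* Defs.v *)
From HB Require Import structures.
From mathcomp Require Import all_boot all_order all_algebra.
From mathcomp Require Import mpoly.
Set Implicit Arguments. Unset Strict Implicit. Unset Printing Implicit Defensive.
Import GRing.Theory.
Local Open Scope ring_scope.

(* Index set of the parameters a^{(i)}_J : pairs (i, J) with i : 'I_n
   standing for the paper's index i+1 (so 1 <= i+1 <= n), J a subset of [n]
   with |J| <= (i+1) - 1. *)
Definition Aidx (n : nat) := {x : 'I_n * {set 'I_n} | (#|x.2| <= x.1)%N}.

Definition auxdeg n (x : Aidx n) : nat := ((val x).1).+1 - #|(val x).2|.

Definition nA (n : nat) : nat := #|{: Aidx n}|.

(* The parameter a_x corresponds to the variable 'X_(enum_rank x) of
   {mpoly K[nA n]}; weighted (auxiliary) degree of a monomial. *)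
Definition auxmdeg n (m : 'X_{1..nA n}) : nat :=
  \sum_(k : 'I_(nA n)) (m k * auxdeg (enum_val k))%N.

Definition aux_homog (K : fieldType) n (e : nat) (R : {mpoly K[nA n]}) : Prop :=
  forall m, m \in msupp R -> auxmdeg m = e.

Definition aux_eval (K : fieldType) n (R : {mpoly K[nA n]}) (a : Aidx n -> K) : K :=
  R.@[fun k : 'I_(nA n) => a (enum_val k)].

(* P[T] is {poly {mpoly K[n]}} (polynomials in T over P = K[v_1..v_n]).
   Embedding of K[T] into P[T]. *)
Definition KT_to_PT (K : fieldType) n (c : {poly K}) : {poly {mpoly K[n]}} :=
  map_poly (fun x : K => x%:MP_[n]) c.

Definition gH (K : fieldType) n (a : Aidx n -> K) (i : 'I_n) : {poly {mpoly K[n]}} :=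
  \sum_(x : Aidx n | (val x).1 == i)
     (((a x)%:MP_[n] * \prod_(j in (val x).2) 'X_j)%:P * 'X^(auxdeg x)).

Definition genH (K : fieldType) n (a : Aidx n -> K) (i : 'I_n) : {poly {mpoly K[n]}} :=
  (mesym n K i.+1)%:P + gH a i.

Definition inEH (K : fieldType) n (a : Aidx n -> K) (p : {poly {mpoly K[n]}}) : Prop :=
  exists h : 'I_n -> {poly {mpoly K[n]}}, p = \sum_(i < n) h i * genH a i.

Definition is_basis_mod_EH (K : fieldType) n (a : Aidx n -> K) N
    (b : 'I_N -> {poly {mpoly K[n]}}) : Prop :=
  (forall p, exists c : 'I_N -> {poly K},
      inEH a (p - \sum_(k < N) KT_to_PT n (c k) * b k)) /\
  (forall c : 'I_N -> {poly K},
      inEH a (\sum_(k < N) KT_to_PT n (c k) * b k) -> forall k, c k = 0).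

Definition represents_mult (K : fieldType) n (a : Aidx n -> K) N
    (b : 'I_N -> {poly {mpoly K[n]}}) (u : {mpoly K[n]}) (M : 'M[{poly K}]_N) : Prop :=
  forall j : 'I_N, inEH a (u%:P * b j - \sum_(i < N) KT_to_PT n (M i j) * b i).

Definition principal_minor_sum (R : comNzRingType) N (r : nat) (M : 'M[R]_N) : R :=
  \sum_(S : {set 'I_N} | #|S| == r)
     \det (mxsub (@enum_val _ (mem S)) (@enum_val _ (mem S)) M).

(* Main.v *)
Require Import Defs.
From HB Require Import structures.
From mathcomp Require Import all_boot all_order all_algebra.
From mathcomp Require Import mpoly.
From mathcomp Require Import all_fingroup.
From mathcomp Require Import zify ring lra.
Set Implicit Arguments. Unset Strict Implicit. Unset Printing Implicit Defensive.
Import GRing.Theory.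
Local Open Scope ring_scope.

Section Allm.
Variables (S : comNzRingType) (n : nat).
Local Notation W := {mpoly S[n]}.

Definition allm (P : pred 'X_{1..n}) (p : W) := all P (msupp p).

Lemma allmP (P : pred _) (p : W) : reflect {in msupp p, forall m, P m} (allm P p).
Proof. exact: allP. Qed.

Lemma allm0 (P : pred _) : allm P 0.
Proof. by rewrite /allm msupp0. Qed.

Lemma allmD (P : pred _) (p q : W) : allm P p -> allm P q -> allm P (p + q).
Proof.
move=> /allmP hp /allmP hq; apply/allmP => m /msuppD_le.
by rewrite mem_cat => /orP[/hp|/hq].
Qed.

Lemma allmN (P : pred _) (p : W) : allm P p -> allm P (- p).
Proof. by move=> /allmP hp; apply/allmP => m; rewrite (perm_mem (msuppN _)) => /hp. Qed.

Lemma allmB (P : pred _) (p q : W) : allm P p -> allm P q -> allm P (p - q).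
Proof. by move=> hp hq; apply: allmD => //; apply: allmN. Qed.

Lemma allm_sum (P : pred _) (I : Type) (r : seq I) (Q : pred I) (F : I -> W) :
  (forall i, Q i -> allm P (F i)) -> allm P (\sum_(i <- r | Q i) F i).
Proof.
move=> h; elim/big_rec: _ => [|i x Qi hx]; first exact: allm0.
by apply: allmD => //; apply: h.
Qed.

Lemma allmZ (P : pred _) c (p : W) : allm P p -> allm P (c *: p).
Proof. by move=> /allmP hp; apply/allmP => m /msuppZ_le /hp. Qed.

Lemma allmX (P : pred _) m : P m -> allm P ('X_[m] : W).
Proof. by move=> Pm; rewrite /allm msuppX /= Pm. Qed.

Lemma allmC (P : pred _) c : P 0%MM -> allm P (c%:MP : W).
Proof. by move=> P0; rewrite /allm msuppC; case: eqP => //= _; rewrite P0. Qed.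

Lemma allmM (P1 P2 P3 : pred 'X_{1..n}) p q :
  (forall a b, P1 a -> P2 b -> P3 (a + b)%MM) ->
  allm P1 p -> allm P2 q -> allm P3 (p * q : W).
Proof.
move=> h /allmP hp /allmP hq; apply/allmP => m /msuppM_le /allpairsP.
by case=> -[a b] /= [ha hb ->]; apply: h; [apply: hp | apply: hq].
Qed.

Lemma allm_impl (P Q : pred 'X_{1..n}) (p : W) :
  (forall m, P m -> Q m) -> allm P p -> allm Q p.
Proof. by move=> h /allmP hp; apply/allmP => m /hp /h. Qed.

Lemma allm_mesym (P : pred _) k : (forall m, mdeg m = k -> P m) -> allm P (mesym n S k).
Proof.
move=> h; apply: allm_sum => A /eqP cA; rewrite mprodXE; apply: allmX; apply: h.
by rewrite mdeg_sum (eq_bigr (fun _ => 1%N)) ?sum1_card // => i _; rewrite mdeg1.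
Qed.

End Allm.

Section Span.
Variables (S : comNzRingType) (n : nat).
Local Notation W := {mpoly S[n]}.
Variable g : 'I_n -> W.
Hypothesis hg : forall i : 'I_n, allm (fun m => mdeg m <= i)%N (g i).

Definition fgen (i : 'I_n) : W := mesym n S i.+1 + g i.

Definition suppge (k : nat) (m : 'X_{1..n}) := [forall i : 'I_n, (i < k)%N ==> (m i == 0%N)].

Definition Good (k l : nat) (p : W) := exists (c : 'I_n -> W) (r : W),
  [/\ p = \sum_(j < n) c j * mesym n S j.+1 + r,
      forall j : 'I_n, allm (fun m => mdeg m + j.+1 <= l)%N (c j) &
      allm (fun m => suppge k m && (mdeg m <= l)%N) r].

Lemma Good_add k l p q : Good k l p -> Good k l q -> Good k l (p + q).
Proof.
case=> c1 [r1 [-> h1 h1']] [c2 [r2 [-> h2 h2']]].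
exists (fun j => c1 j + c2 j), (r1 + r2); split.
- under [X in _ = X + _]eq_bigr => j _ do rewrite mulrDl.
  rewrite big_split /=; ring.
- by move=> j; apply: allmD.
- exact: allmD.
Qed.

Lemma Good0 k l : Good k l 0.
Proof.
exists (fun _ => 0), 0; split; first by rewrite big1 ?addr0 // => j _; rewrite mul0r.
- by move=> j; apply: allm0.
- exact: allm0.
Qed.

Lemma Good_mono k l p : Good k.+1 l p -> Good k l p.
Proof.
case=> c [r [-> h h']]; exists c, r; split => //.
apply: allm_impl h' => m /andP[/forallP hm ->]; rewrite andbT.
by apply/forallP => i; apply/implyP => hi; move/implyP: (hm i); apply; apply: ltnW.
Qed.

Lemma Good_mulX (k : 'I_n) l p : Good k l p -> Good k l.+1 ('X_k * p).
Proof.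
case=> c [r [-> h h']]; exists (fun j => 'X_k * c j), ('X_k * r); split.
- by rewrite mulrDr mulr_sumr; congr (_ + _); apply: eq_bigr => j _; rewrite mulrA.
- move=> j; apply: (allmM (P1 := fun m => m == U_(k)%MM)) (h j) => //.
    by move=> a b /eqP -> hb; rewrite mdegD mdeg1; lia.
  by apply: allmX.
- apply: (allmM (P1 := fun m => m == U_(k)%MM)) h' => //; last by apply: allmX.
  move=> a b /eqP -> /andP[/forallP hb hb']; rewrite mdegD mdeg1 ltnS hb' andbT.
  apply/forallP => i; apply/implyP => hi; rewrite mnmDE mnm1E.
  have -> : (k == i) = false by apply/negbTE; apply/eqP => ki; rewrite -ki ltnn in hi.
  by move/implyP: (hb i) => /(_ hi) /eqP ->.
Qed.

Lemma Good_const k l (c : S) : Good k l c%:MP.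
Proof.
exists (fun _ => 0), c%:MP; split; first by rewrite big1 ?add0r // => j _; rewrite mul0r.
- by move=> j; apply: allm0.
- apply: allmC; rewrite mdeg0 andbT; apply/forallP => i; apply/implyP => _.
  by rewrite mnm0E.
Qed.

Lemma Good_mesym k (j : 'I_n) (c : S) : Good k j.+1 (c%:MP * mesym n S j.+1).
Proof.
exists (fun j' => if j' == j then c%:MP else 0), 0; split.
- rewrite addr0 (bigD1 j) //= eqxx big1 ?addr0 // => j' /negbTE ->; by rewrite mul0r.
- move=> j'; case: eqP => [->|_]; last exact: allm0.
  by apply: allmC; rewrite mdeg0.
- exact: allm0.
Qed.


Lemma Good_mesymC k m (c : S) : (m <= n)%N -> Good k m (c%:MP * mesym n S m).
Proof.
case: m => [|j] hj; first by rewrite mesym0E mulr1; apply: Good_const.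
exact: (Good_mesym k (Ordinal hj)).
Qed.

Definition Apol (m : nat) : {poly W} := \prod_(i < n | (i < m)%N) ('X - ('X_i)%:P).

Lemma Apol0 : Apol 0 = 1.
Proof. by rewrite /Apol big_pred0. Qed.

Lemma ApolS (k : 'I_n) : Apol k.+1 = ('X - ('X_k)%:P) * Apol k.
Proof.
rewrite /Apol (bigD1 k) ?ltnSn //=; congr (_ * _); apply: eq_bigl => i.
by rewrite ltnS ltn_neqAle andbC -val_eqE.
Qed.

Lemma coefApolS (k : 'I_n) i :
  (Apol k.+1)`_i.+1 = (Apol k)`_i - 'X_k * (Apol k)`_i.+1.
Proof. by rewrite ApolS mulrBl coefB coefXM coefCM. Qed.

Lemma Apol_top m : (m <= n)%N -> (Apol m)`_m = 1 /\ forall i, (m < i)%N -> (Apol m)`_i = 0.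
Proof.
elim: m => [|m IH] hm.
  by rewrite Apol0; split=> [|[|i] //]; rewrite coefC.
have [h1 h2] := IH (ltnW hm).
have E := coefApolS (Ordinal hm); simpl in E.
split; first by rewrite E h1 h2 // mulr0 subr0.
by case=> [//|i] hi; rewrite E !h2 ?mulr0 ?subr0 //; lia.
Qed.

Lemma mmap_mesym k :
  mmap (intr : int -> W) (fun i => 'X_i) (mesym n int k) = mesym n S k.
Proof.
rewrite /mesym raddf_sum /=; apply: eq_bigr => A _.
rewrite rmorph_prod /=; apply: eq_bigr => i _.
by rewrite mmapX mmap1U.
Qed.

Lemma VieteS : Apol n = \sum_(k < n.+1) (-1)^+k *: (mesym n S k *: 'X^(n - k)).
Proof.
have := Viete n => /(congr1 (map_poly (mmap (intr : int -> W) (fun i => 'X_i)))).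
rewrite rmorph_prod /= => E.
have -> : Apol n = \prod_(i < n) ('X - ('X_i)%:P) by apply: eq_bigl => i; rewrite ltn_ord.
rewrite (eq_bigr (fun i : 'I_n => map_poly (mmap intr (fun i => 'X_i)) ('X - ('X_i)%:P))).
  rewrite E raddf_sum /=; apply: eq_bigr => k _.
  by rewrite !map_polyZ /= map_polyXn rmorphXn rmorphN1 mmap_mesym.
by move=> i _; rewrite raddfB /= map_polyX map_polyC /= mmapX mmap1U.
Qed.

Lemma Good_sum k l (I : Type) (r : seq I) (P : pred I) (F : I -> W) :
  (forall i, P i -> Good k l (F i)) -> Good k l (\sum_(i <- r | P i) F i).
Proof.
move=> h; elim/big_rec: _ => [|i x Pi hx]; first exact: Good0.
by apply: Good_add => //; apply: h.
Qed.

Lemma Good_base i : (i <= n)%N -> Good n (n - i) (Apol n)`_i.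
Proof.
move=> hi; rewrite VieteS coef_sum; apply: Good_sum => k _.
rewrite !coefZ coefXn; case: eqP => [->|_]; last by rewrite !mulr0; apply: Good0.
have -> : ((-1) ^+ k : W) = ((-1) ^+ k : S)%:MP by rewrite rmorphXn rmorphN1.
rewrite mulr1.
have -> : (n - (n - k))%N = k by have := ltn_ord k; lia.
by apply: Good_mesymC; rewrite -ltnS.
Qed.

Lemma Good_Apol t : (t <= n)%N -> forall i, (i <= n - t)%N ->
  Good (n - t) (n - t - i) (Apol (n - t))`_i.
Proof.
elim: t => [|t IH] ht i hi.
  by rewrite subn0 in hi *; apply: Good_base.
have hm : (n - t.+1 < n)%N by lia.
have Em : (n - t)%N = (n - t.+1).+1 by lia.
move: hi; set m := (n - t.+1)%N => hi.
have E := coefApolS (Ordinal hm); simpl in E.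
suff h : forall j, (j <= m)%N -> Good m j (Apol m)`_(m - j).
  by have := h (m - i)%N (leq_subr _ _); rewrite subKn.
elim=> [|j IHj] hj.
  rewrite subn0 (Apol_top (ltnW hm)).1.
  have -> : (1 : W) = (1 : S)%:MP by rewrite mpolyC1.
  exact: Good_const.
have Ej : (m - j)%N = (m - j.+1).+1 by lia.
have -> : (Apol m)`_(m - j.+1) = (Apol m.+1)`_(m - j.+1).+1 + 'X_(Ordinal hm) * (Apol m)`_(m - j.+1).+1.
  by rewrite E subrK.
apply: Good_add.
  apply: Good_mono; have := IH (ltnW ht) (m - j.+1).+1; rewrite Em.
  have -> : (m.+1 - (m - j.+1).+1)%N = j.+1 by lia.
  by apply; lia.
have hj' : (j <= m)%N by lia.
have := @Good_mulX (Ordinal hm) _ _ (IHj hj'); rewrite -Ej; exact.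
Qed.

Definition nu (m : 'X_{1..n}) := (\sum_(i < n) m i * (n - i))%N.
Definition ltmm (b c : 'X_{1..n}) :=
  (mdeg b < mdeg c)%N || ((mdeg b == mdeg c) && (nu b < nu c)%N).

Lemma nuD a b : nu (a + b)%MM = (nu a + nu b)%N.
Proof. by rewrite /nu -big_split /=; apply: eq_bigr => i _; rewrite mnmDE mulnDl. Qed.

Lemma nuU (k : 'I_n) i : nu (U_(k) *+ i)%MM = (i * (n - k))%N.
Proof.
rewrite /nu (bigD1 k) //= big1 ?addn0; first by rewrite mulmnE mnm1E eqxx mul1n.
by move=> j /negbTE hj; rewrite mulmnE mnm1E eq_sym hj.
Qed.

Lemma mdegU (k : 'I_n) i : mdeg (U_(k) *+ i)%MM = i.
Proof. by rewrite mdegMn mdeg1 mul1n. Qed.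

Lemma nu_suppge k a : suppge k a -> (nu a <= mdeg a * (n - k))%N.
Proof.
move=> /forallP h; rewrite /nu mdegE big_distrl /=; apply: leq_sum => i _.
have := h i; case: ltnP => hi /=; first by move/eqP ->.
by move=> _; rewrite leq_mul2l leq_sub2l ?orbT.
Qed.

Lemma relation (k : 'I_n) : exists (C : 'I_n -> W) (Q : W),
  'X_k ^+ k.+1 = \sum_(j < n) C j * fgen j + Q /\
  allm (fun b => ltmm b (U_(k) *+ k.+1)%MM) Q.
Proof.
have hk : (k.+1 <= n)%N by [].
set A := Apol k.+1.
have [Atop Azero] := Apol_top hk.
have root : A.[('X_k : W)] = 0 by rewrite /A ApolS hornerM hornerXsubC subrr mul0r.
have szA : (size A <= k.+2)%N by apply/leq_sizeP => j hj; apply: Azero.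
rewrite (horner_coef_wide _ szA) big_ord_recr /= Atop mul1r in root.
have EX : 'X_k ^+ k.+1 = - \sum_(i < k.+1) A`_i * 'X_k ^+ i.
  by apply/eqP; rewrite -addr_eq0 addrC root.
have G : forall i : 'I_k.+1, Good k.+1 (k.+1 - i) A`_i.
  move=> i; have := Good_Apol (leq_subr k.+1 n) (i := i).
  have -> : (n - (n - k.+1))%N = k.+1 by lia.
  by apply; have := ltn_ord i; lia.
have /fin_all_exists [c hc] : forall i : 'I_k.+1, exists c, exists r,
   [/\ A`_i = \sum_(j < n) c j * mesym n S j.+1 + r,
      forall j : 'I_n, allm (fun m => mdeg m + j.+1 <= k.+1 - i)%N (c j) &
      allm (fun m => suppge k.+1 m && (mdeg m <= k.+1 - i)%N) r].
  by move=> i; case: (G i) => c [r h]; exists c, r.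
have /fin_all_exists [r hr] := hc.
pose Y j := \sum_(i < k.+1) c i j * 'X_k ^+ i.
exists (fun j => - Y j), (\sum_(j < n) Y j * g j - \sum_(i < k.+1) r i * 'X_k ^+ i).
split.
  rewrite EX.
  have e1 : \sum_(i < k.+1) A`_i * 'X_k ^+ i =
     \sum_(j < n) Y j * mesym n S j.+1 + \sum_(i < k.+1) r i * 'X_k ^+ i.
    rewrite (eq_bigr (fun i : 'I_k.+1 => (\sum_(j < n) c i j * mesym n S j.+1) * 'X_k ^+ i + r i * 'X_k ^+ i)); last first.
      by move=> i _; case: (hr i) => -> _ _; rewrite mulrDl.
    rewrite big_split /=; congr (_ + _).
    rewrite (eq_bigr (fun i : 'I_k.+1 => \sum_(j < n) c i j * mesym n S j.+1 * 'X_k ^+ i)); last first.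
      by move=> i _; rewrite mulr_suml.
    rewrite exchange_big /=; apply: eq_bigr => j _; rewrite /Y mulr_suml.
    by apply: eq_bigr => i _; rewrite mulrAC.
  rewrite e1 /fgen.
  under [X in _ = X + _]eq_bigr => j _ do rewrite mulNr mulrDr opprD.
  rewrite big_split /= !sumrN; ring.
apply: allmB.
  apply: allm_sum => j _.
  apply: (allmM (P1 := fun m => (mdeg m + j <= k)%N) (P2 := fun m => (mdeg m <= j)%N)); last exact: hg.
    move=> a b ha hb; rewrite /ltmm mdegD mdegU; apply/orP; left; lia.
  apply: allm_sum => i _; rewrite mpolyXn.
  apply: (allmM (P1 := fun m => (mdeg m + j.+1 <= k.+1 - i)%N) (P2 := fun m => m == (U_(k) *+ i)%MM)).
  - move=> a b ha /eqP ->; rewrite mdegD mdegU; have := ltn_ord i; lia.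
  - by case: (hr i) => _ /(_ j).
  - exact: allmX.
apply: allm_sum => i _; rewrite mpolyXn.
apply: (allmM (P1 := fun m => suppge k.+1 m && (mdeg m <= k.+1 - i)%N) (P2 := fun m => m == (U_(k) *+ i)%MM)).
- move=> a b /andP[ha hd] /eqP ->; rewrite /ltmm !mdegD !mdegU !nuD !nuU.
  have := nu_suppge ha; have := ltn_ord i; have := ltn_ord k.
  move: (nu a) (mdeg a) hd => x d hd hkn hik hx.
  have [e he] : exists e, (n - k = e.+1)%N by exists (n - k.+1)%N; lia.
  have he' : (n - k.+1 = e)%N by lia.
  rewrite he he' in hx *.
  case: (ltnP (d + i) k.+1) => hdi //=.
  apply/andP; split; first by apply/eqP; lia.
  have : (x <= d * e)%N by [].
  have hd' : (d + i = k.+1)%N by lia.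
  move=> hx'; have : (d * e + i * e.+1 < k.+1 * e.+1)%N.
    nia.
  lia.
- by case: (hr i).
- exact: allmX.
Qed.

Definition Desc := {dffun forall i : 'I_n, 'I_i.+1}.
Definition dmon (t : Desc) : 'X_{1..n} := [multinom (t i : nat) | i < n].

Definition spanned (p : W) := exists (c : Desc -> S) (h : 'I_n -> W),
  p = \sum_(t : Desc) c t *: 'X_[dmon t] + \sum_(i < n) h i * fgen i.

Lemma spanned0 : spanned 0.
Proof.
exists (fun _ => 0), (fun _ => 0).
by rewrite !big1 ?addr0 // => i _; rewrite ?mul0r ?scale0r.
Qed.

Lemma spannedD p q : spanned p -> spanned q -> spanned (p + q).
Proof.
case=> c1 [h1 ->] [c2 [h2 ->]].
exists (fun t => c1 t + c2 t), (fun i => h1 i + h2 i).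
under [X in _ = X + _]eq_bigr => t _ do rewrite scalerDl.
under [X in _ = _ + X]eq_bigr => i _ do rewrite mulrDl.
rewrite !big_split /=; ring.
Qed.

Lemma spannedZ a p : spanned p -> spanned (a *: p).
Proof.
case=> c [h ->]; exists (fun t => a * c t), (fun i => a *: h i).
rewrite scalerDr scaler_sumr; congr (_ + _).
  by apply: eq_bigr => t _; rewrite scalerA.
by rewrite scaler_sumr; apply: eq_bigr => i _; rewrite scalerAl.
Qed.

Lemma spanned_gen q i : spanned (q * fgen i).
Proof.
exists (fun _ => 0), (fun j => if j == i then q else 0).
rewrite big1 ?add0r; last by move=> t _; rewrite scale0r.
rewrite (bigD1 i) //= eqxx big1 ?addr0 // => j /negbTE ->; by rewrite mul0r.
Qed.

Lemma spanned_sum (I : Type) (r : seq I) (P : pred I) (F : I -> W) :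
  (forall i, P i -> spanned (F i)) -> spanned (\sum_(i <- r | P i) F i).
Proof.
move=> h; elim/big_rec: _ => [|i x Pi hx]; first exact: spanned0.
by apply: spannedD => //; apply: h.
Qed.

Lemma spanned_desc (a : 'X_{1..n}) : (forall i : 'I_n, a i <= i)%N -> spanned 'X_[a].
Proof.
move=> ha.
pose t : Desc := [ffun i => (Ordinal (ha i : (a i < i.+1)%N))].
have dt : dmon t = a by apply/mnmP => i; rewrite /dmon mnmE ffunE.
exists (fun t' => (t' == t)%:R), (fun _ => 0).
rewrite (bigD1 t) //= eqxx scale1r dt.
rewrite [X in _ = _ + X + _]big1 => [|t' /negbTE ->]; last by rewrite scale0r.
by rewrite big1 ?addr0 // => j _; rewrite mul0r.
Qed.

Lemma spannedX (a : 'X_{1..n}) : spanned 'X_[a].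
Proof.
move: {2}(mdeg a).+1 (ltnSn (mdeg a)) => N; elim: N a => [//|N IHN] a ha.
case: (ltnP (mdeg a) N) => hN; first exact: IHN.
have hdeg : mdeg a = N by apply/eqP; rewrite eqn_leq -ltnS ha hN.
move: {2}(nu a).+1 (ltnSn (nu a)) => V; elim: V a ha hN hdeg => [//|V IHV] a ha hN hdeg hV.
case: (boolP [forall i : 'I_n, (a i <= i)%N]) => [/forallP hd|]; first exact: spanned_desc.
rewrite negb_forall => /existsP [k]; rewrite -ltnNge => hk.
pose a' := (a - U_(k) *+ k.+1)%MM.
have Ea : a = (a' + U_(k) *+ k.+1)%MM.
  rewrite /a' submK //; apply/mnm_lepP => i; rewrite mulmnE mnm1E.
  by case: eqP => [<-|_]; rewrite ?mul1n ?mul0n.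
have [C [Q [EQ hQ]]] := relation k.
rewrite Ea mpolyXD -mpolyXn EQ mulrDr mulr_sumr.
apply: spannedD; first by apply: spanned_sum => j _; rewrite mulrA; apply: spanned_gen.
rewrite {1}(mpolyE Q) mulr_sumr big_seq; apply: spanned_sum => b hb.
rewrite -scalerAr -mpolyXD; apply: spannedZ.
have := allmP _ _ hQ b hb; rewrite /ltmm mdegU => /orP [hb1|/andP[/eqP hb1 hb2]].
  apply: IHN; move: hdeg; rewrite Ea !mdegD mdegU; lia.
apply: IHV.
- by move: hdeg; rewrite Ea !mdegD mdegU; lia.
- by move: hdeg; rewrite Ea !mdegD mdegU; lia.
- by move: hdeg; rewrite Ea !mdegD mdegU; lia.
- move: hV hb2; rewrite Ea !nuD !nuU; lia.
Qed.

Lemma spanned_all p : spanned p.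
Proof.
rewrite (mpolyE p); apply: spanned_sum => m _; apply: spannedZ; exact: spannedX.
Qed.

End Span.

Section LA.
Variable R : comNzRingType.

Lemma det_castmx m m' (e : m = m') (A : 'M[R]_m) : \det (castmx (e, e) A) = \det A.
Proof. by case: m' / e; rewrite castmx_id. Qed.

Variable N : nat.

Definition Bmx (J : {set 'I_N}) (A : 'M[R]_N) : 'M[R]_N :=
  \matrix_(i, j) if (i \in J) && (j \in J) then A i j else (i == j)%:R.

Lemma det_mxsub_perm (p : 'S_N) (B : 'M[R]_N) : \det (mxsub p p B) = \det B.
Proof.
rewrite mxsubrc -row_permEsub -col_permEsub row_permE col_permE !det_mulmx !det_perm.
by rewrite odd_permV mulrCA -expr2 sqrr_sign mulr1.
Qed.

Lemma det_expand (x : R) (A : 'M[R]_N) :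
  \det (1%:M + x *: A) = \sum_(J : {set 'I_N}) x ^+ #|J| * \det (Bmx J A).
Proof.
rewrite /determinant.
transitivity (\sum_(s : 'S_N) (-1) ^+ s * \sum_(J : {set 'I_N})
   \prod_i (if i \in J then x * A i (s i) else (i == s i)%:R)).
  apply: eq_bigr => s _; congr (_ * _).
  rewrite (eq_bigr (fun i => x * A i (s i) + (i == s i)%:R)); last first.
    by move=> i _; rewrite !mxE addrC.
  by rewrite bigA_distr.
rewrite (eq_bigr (fun s : 'S_N => \sum_(J : {set 'I_N}) (-1) ^+ s *
   \prod_i (if i \in J then x * A i (s i) else (i == s i)%:R))); last first.
  by move=> s _; rewrite mulr_sumr.
rewrite exchange_big /=; apply: eq_bigr => J _; rewrite mulr_sumr.
apply: eq_bigr => s _; rewrite mulrCA; congr (_ * _).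
case: (boolP [forall i, (i \notin J) ==> (s i == i)]) => [/forallP fx|].
  have sJ : forall i, i \in J -> s i \in J.
    move=> i iJ; apply/negPn/negP => siJ; move/implyP: (fx (s i)) => /(_ siJ) /eqP.
    by move/perm_inj => E; rewrite E iJ in siJ.
  rewrite (eq_bigr (fun i => (if i \in J then x else 1) * Bmx J A i (s i))).
    by rewrite big_split /= -big_mkcond /= prodr_const.
  move=> i _; rewrite mxE; case: (boolP (i \in J)) => iJ /=; first by rewrite sJ.
  by rewrite mul1r.
rewrite negb_forall => /existsP [i0]; rewrite negb_imply => /andP[i0J /eqP si0].
rewrite (bigD1 i0) //= (negbTE i0J) [in RHS](bigD1 i0) //= mxE (negbTE i0J) /=.
by rewrite eq_sym; case: eqP => // _; rewrite !mul0r mulr0.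
Qed.

Lemma Bmx_sub (J : {set 'I_N}) (A : 'M[R]_N) :
  \det (Bmx J A) = \det (mxsub (@enum_val _ (mem J)) (@enum_val _ (mem J)) A).
Proof.
have eqN : (#|J| + #|~: J| = N)%N by rewrite cardsC card_ord.
pose f (i : 'I_(#|J| + #|~: J|)) : 'I_N :=
  match split i with inl a => @enum_val _ (mem J) a | inr b => @enum_val _ (mem (~: J)) b end.
have fl a : f (lshift _ a) = @enum_val _ (mem J) a.
  by rewrite /f (unsplitK (inl a : 'I_#|J| + 'I_#|~: J|)).
have fr b : f (rshift _ b) = @enum_val _ (mem (~: J)) b.
  by rewrite /f (unsplitK (inr b : 'I_#|J| + 'I_#|~: J|)).
have f_inj : injective f.
  move=> i j; rewrite -(splitK i) -(splitK j).
  case: (split i) => a; case: (split j) => b /=; rewrite ?fl ?fr.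
  - by move/enum_val_inj ->.
  - by move=> E; move: (enum_valP a) (enum_valP b); rewrite E inE => ->.
  - by move=> E; move: (enum_valP a) (enum_valP b); rewrite E inE => /negbTE ->.
  - by move/enum_val_inj ->.
have fc_inj : injective (f \o cast_ord (esym eqN)).
  by apply: inj_comp f_inj _; apply: cast_ord_inj.
pose p := perm fc_inj.
have fp i : f i = p (cast_ord eqN i) by rewrite permE /= cast_ordK.
have E1 : mxsub f f (Bmx J A) = block_mx (mxsub (@enum_val _ (mem J)) (@enum_val _ (mem J)) A) 0 0 1%:M.
  apply/matrixP => i j; rewrite -(splitK i) -(splitK j).
  case: (split i) => a; case: (split j) => b /=; rewrite mxE ?fl ?fr /Bmx.
  - by rewrite block_mxEul !mxE !enum_valP.
  - rewrite block_mxEur !mxE enum_valP /=.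
    have := enum_valP b; rewrite inE => /negbTE -> /=.
    by case: eqP => // E; have := enum_valP b; rewrite -E inE enum_valP.
  - rewrite block_mxEdl !mxE.
    have := enum_valP a; rewrite inE => /negbTE -> /=.
    by case: eqP => // E; have := enum_valP a; rewrite E inE enum_valP.
  - rewrite block_mxEdr !mxE.
    have := enum_valP a; rewrite inE => /negbTE -> /=.
    by rewrite (inj_eq enum_val_inj).
have E2 : mxsub f f (Bmx J A) = castmx (esym eqN, esym eqN) (mxsub p p (Bmx J A)).
  rewrite -mxsub_cast -mxsub_comp; apply: eq_mxsub => i /=; by rewrite fp.
have := congr1 determinant E1; rewrite det_ublock det1 mulr1 => <-.
by rewrite E2 det_castmx det_mxsub_perm.
Qed.

End LA.

Lemma psum_coef (R : comNzRingType) N (A : 'M[R]_N) r :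
  (\det (1%:M + 'X *: map_mx polyC A))`_r = principal_minor_sum r A.
Proof.
rewrite det_expand coef_sum /principal_minor_sum [RHS]big_mkcond /=.
apply: eq_bigr => J _.
have -> : Bmx J (map_mx polyC A) = map_mx polyC (Bmx J A).
  by apply/matrixP => i j; rewrite !mxE; case: ifP => //; rewrite rmorph_nat.
rewrite det_map_mx /= mulrC mul_polyC coefZ coefXn Bmx_sub eq_sym.
by case: eqP; rewrite ?mulr1 ?mulr0.
Qed.

Lemma psum_sim (R : comNzRingType) N (Q A C : 'M[R]_N) r : Q *m C = 1%:M ->
  principal_minor_sum r (Q *m A *m C) = principal_minor_sum r A.
Proof.
move=> QC; rewrite -!psum_coef; congr (_`_r).
have -> : 1%:M + 'X *: map_mx polyC (Q *m A *m C) =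
    map_mx polyC Q *m (1%:M + 'X *: map_mx polyC A) *m map_mx polyC C.
  rewrite mulmxDr mulmx1 mulmxDl -map_mxM QC map_mx1; congr (_ + _).
  by rewrite -scalemxAr -scalemxAl !map_mxM.
rewrite !det_mulmx mulrAC -det_mulmx -map_mxM QC map_mx1 det1 mul1r.
by [].
Qed.

Lemma psum_diag (R : idomainType) N (A B : 'M[R]_N) (lam : 'I_N -> R) (c : R) r :
  (forall i, lam i != 0) -> (forall i j, lam i * A i j = c * B i j * lam j) ->
  principal_minor_sum r A = c ^+ r * principal_minor_sum r B.
Proof.
move=> hl hAB; rewrite /principal_minor_sum mulr_sumr; apply: eq_bigr => J /eqP hJ.
set e := @enum_val _ (mem J).
pose D := diag_mx (\row_i lam (e i)).
have E : D *m mxsub e e A = c *: (mxsub e e B *m D).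
  apply/matrixP => i j; rewrite mul_diag_mx mul_mx_diag !mxE hAB; ring.
have := congr1 determinant E; rewrite det_mulmx detZ det_mulmx.
have nz : \det D != 0.
  by rewrite det_diag; apply/prodf_neq0 => i _; rewrite mxE.
rewrite -hJ; set u := c ^+ _.
by rewrite mulrC mulrA => /(mulIf nz).
Qed.

Section BC.
Variables (K : fieldType) (n : nat) (a : Aidx n -> K).
Local Notation PT := {poly {mpoly K[n]}}.
Local Notation KT := (@KT_to_PT K n).
Local Notation E := (inEH a).

Lemma KT_is_rmorph : @KT_to_PT K n = map_poly (@mpolyC n K).
Proof. by []. Qed.

Lemma KTD x y : KT (x + y) = KT x + KT y.
Proof. by rewrite KT_is_rmorph rmorphD. Qed.
Lemma KTB x y : KT (x - y) = KT x - KT y.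
Proof. by rewrite KT_is_rmorph rmorphB. Qed.
Lemma KTM x y : KT (x * y) = KT x * KT y.
Proof. by rewrite KT_is_rmorph rmorphM. Qed.
Lemma KT0 : KT 0 = 0.
Proof. by rewrite KT_is_rmorph rmorph0. Qed.
Lemma KT1 : KT 1 = 1.
Proof. by rewrite KT_is_rmorph rmorph1. Qed.
Lemma KT_sum (I : Type) (r : seq I) (P : pred I) (F : I -> {poly K}) :
  KT (\sum_(i <- r | P i) F i) = \sum_(i <- r | P i) KT (F i).
Proof. by rewrite KT_is_rmorph rmorph_sum. Qed.
Lemma KT_nat m : KT m%:R = m%:R.
Proof. by rewrite KT_is_rmorph rmorph_nat. Qed.

Lemma E0 : E 0.
Proof. by exists (fun _ => 0); rewrite big1 // => i _; rewrite mul0r. Qed.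

Lemma ED p q : E p -> E q -> E (p + q).
Proof.
case=> h1 -> [h2 ->]; exists (fun i => h1 i + h2 i).
by rewrite -big_split /=; apply: eq_bigr => i _; rewrite mulrDl.
Qed.

Lemma EM q p : E p -> E (q * p).
Proof.
case=> h ->; exists (fun i => q * h i).
by rewrite mulr_sumr; apply: eq_bigr => i _; rewrite mulrA.
Qed.

Lemma EN p : E p -> E (- p).
Proof. by move=> hp; rewrite -mulN1r; apply: EM. Qed.

Lemma EB p q : E p -> E q -> E (p - q).
Proof. by move=> hp hq; apply: ED => //; apply: EN. Qed.

Lemma E_sum (I : Type) (r : seq I) (P : pred I) (F : I -> PT) :
  (forall i, P i -> E (F i)) -> E (\sum_(i <- r | P i) F i).
Proof.
move=> h; elim/big_rec: _ => [|i x Pi hx]; first exact: E0.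
by apply: ED => //; apply: h.
Qed.

Lemma E_eq p q : p = q -> E p -> E q.
Proof. by move=> ->. Qed.

Variable N : nat.

Lemma comb (X Y : 'I_N -> PT) (T : 'M[{poly K}]_N) (x : PT) (al : 'I_N -> {poly K}) :
  (forall k, E (X k - \sum_l KT (T l k) * Y l)) ->
  E (x - \sum_k KT (al k) * X k) ->
  E (x - \sum_l KT (\sum_k T l k * al k) * Y l).
Proof.
move=> hXY hx.
have -> : x - \sum_l KT (\sum_k T l k * al k) * Y l =
   (x - \sum_k KT (al k) * X k) + \sum_k KT (al k) * (X k - \sum_l KT (T l k) * Y l).
  have -> : \sum_l KT (\sum_k T l k * al k) * Y l =
     \sum_k KT (al k) * \sum_l KT (T l k) * Y l.
    under eq_bigr => l _ do rewrite KT_sum mulr_suml.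
    rewrite exchange_big /=; apply: eq_bigr => k _; rewrite mulr_sumr.
    by apply: eq_bigr => l _; rewrite KTM mulrA [KT (al k) * _]mulrC.
  under [X in _ = _ + X]eq_bigr => k _ do rewrite mulrBr.
  rewrite big_split /= sumrN; ring.
by apply: ED => //; apply: E_sum => k _; apply: EM.
Qed.

Lemma indep (b : 'I_N -> PT) (x : PT) (al be : 'I_N -> {poly K}) :
  is_basis_mod_EH a b ->
  E (x - \sum_k KT (al k) * b k) -> E (x - \sum_k KT (be k) * b k) -> al =1 be.
Proof.
move=> [_ hind] h1 h2 k.
have := hind (fun k => be k - al k).
have H : E (\sum_k KT (be k - al k) * b k).
  apply: E_eq (EB h1 h2).
  under [RHS]eq_bigr => l _ do rewrite KTB mulrBl.
  rewrite big_split /= sumrN; ring.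
by move=> /(_ H k) /eqP; rewrite subr_eq0 => /eqP.
Qed.

Lemma basis_change (b D : 'I_N -> PT) (u : {mpoly K[n]}) (M Ms : 'M[{poly K}]_N) r :
  is_basis_mod_EH a b ->
  (forall p, exists c : 'I_N -> {poly K}, E (p - \sum_k KT (c k) * D k)) ->
  represents_mult a b u M -> represents_mult a D u Ms ->
  principal_minor_sum r M = principal_minor_sum r Ms.
Proof.
move=> hb hD hM hMs.
have /fin_all_exists [C hC] : forall j : 'I_N, exists c : 'I_N -> {poly K},
  E (b j - \sum_k KT (c k) * D k) by move=> j; apply: hD.
have /fin_all_exists [Q hQ] : forall j : 'I_N, exists c : 'I_N -> {poly K},
  E (D j - \sum_k KT (c k) * b k) by move=> j; case: hb => hsp _; apply: hsp.
pose Cm := \matrix_(k, j) C j k.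
pose Qm := \matrix_(k, j) Q j k.
have hD2b : forall k, E (D k - \sum_l KT (Qm l k) * b l).
  by move=> k; under eq_bigr => l _ do rewrite mxE.
have hb2D : forall k, E (b k - \sum_l KT (Cm l k) * D l).
  by move=> k; under eq_bigr => l _ do rewrite mxE.
have QC : Qm *m Cm = 1%:M.
  apply/matrixP => l j; rewrite !mxE.
  have h1 := comb hD2b (hb2D j).
  have h2 : E (b j - \sum_k KT ((j == k)%:R) * b k).
    apply: E_eq E0; rewrite (bigD1 j) //= eqxx KT1 mul1r big1 ?addr0 ?subrr //.
    by move=> k /negbTE; rewrite eq_sym => ->; rewrite KT0 mul0r.
  by have := indep hb h1 h2 l; rewrite eq_sym.
have EQ : M = Qm *m Ms *m Cm.
  apply/matrixP => m j.
  have h1 : E (u%:P * b j - \sum_k KT (Cm k j) * (u%:P * D k)).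
    apply: E_eq (EM u%:P (hb2D j)).
    by rewrite mulrBr mulr_sumr; congr (_ - _); apply: eq_bigr => k _; rewrite mulrCA.
  have h2 := comb hMs h1.
  have h3 := comb hD2b h2.
  have := indep hb (hM j) h3 m; rewrite !mxE => ->.
  under [RHS]eq_bigr => l _ do rewrite mxE mulr_suml.
  rewrite exchange_big /=; apply: eq_bigr => k _; rewrite mulr_sumr.
  by apply: eq_bigr => l _; rewrite mulrA.
by rewrite EQ psum_sim.
Qed.

End BC.

Lemma mpoly_morph_ext (R : nzRingType) (T : nzRingType) n (F G : {rmorphism {mpoly R[n]} -> T}) :
  (forall c, F c%:MP = G c%:MP) -> (forall i, F 'X_i = G 'X_i) -> forall p, F p = G p.
Proof.
move=> hC hX; elim/mpolyind => [|c m p _ _ IH]; first by rewrite !rmorph0.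
rewrite !rmorphD IH; congr (_ + _).
rewrite -mul_mpolyC !rmorphM hC; congr (_ * _).
rewrite mpolyXE_id !rmorph_prod; apply: eq_bigr => i _.
by rewrite !rmorphXn hX.
Qed.

Section Psi.
Variables (K : fieldType) (n : nat).
Local Notation S0 := {mpoly K[nA n]}.

Definition psi : S0 -> {poly S0} :=
  mmap (polyC \o @mpolyC (nA n) K) (fun k : 'I_(nA n) => ('X_k)%:P * 'X^(auxdeg (enum_val k))).
HB.instance Definition _ := GRing.RMorphism.on psi.

Lemma mmap1_psi (m : 'X_{1..nA n}) :
  mmap1 (fun k : 'I_(nA n) => ('X_k : S0)%:P * 'X^(auxdeg (enum_val k))) m =
  ('X_[m])%:P * 'X^(auxmdeg m).
Proof.
rewrite /mmap1 (eq_bigr (fun k => (('X_k : S0) ^+ m k)%:P * 'X^(m k * auxdeg (enum_val k))%N)).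
  by rewrite big_split /= -rmorph_prod -mpolyXE_id prodrXr.
by move=> k _; rewrite exprMn rmorphXn -exprM mulnC.
Qed.

Lemma psiE (c : S0) : psi c = \sum_(m <- msupp c) (c@_m *: 'X_[m])%:P * 'X^(auxmdeg m).
Proof.
rewrite /psi /mmap; apply: eq_bigr => m _; rewrite mmap1_psi /= mulrA -rmorphM.
by rewrite mul_mpolyC.
Qed.

Lemma psiC (k : K) : psi k%:MP = (k%:MP)%:P.
Proof. by rewrite /psi mmapC. Qed.

Lemma psiX (k : 'I_(nA n)) : psi 'X_k = ('X_k)%:P * 'X^(auxdeg (enum_val k)).
Proof. by rewrite /psi mmapX mmap1U. Qed.

Lemma coef_psi (c : S0) e :
  (psi c)`_e = \sum_(m <- msupp c | auxmdeg m == e) c@_m *: 'X_[m].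
Proof.
rewrite psiE coef_sum [RHS]big_mkcond /=; apply: eq_bigr => m _.
by rewrite mul_polyC coefZ coefXn eq_sym; case: eqP; rewrite ?mulr1 ?mulr0.
Qed.

Lemma aux_homog_coef (c : S0) e : aux_homog e ((psi c)`_e).
Proof.
move=> m hm; suff : allm (fun m => auxmdeg m == e) ((psi c)`_e).
  by move/allmP => /(_ m hm) /eqP.
rewrite coef_psi; apply: allm_sum => m' /eqP he; apply: allmZ; apply: allmX.
by rewrite he.
Qed.

Lemma psi_homog (c : S0) e : aux_homog e c -> psi c = c%:P * 'X^e.
Proof.
move=> hc; rewrite psiE big_seq (eq_bigr (fun m => (c@_m *: 'X_[m])%:P * 'X^e)).
  by rewrite -big_seq -mulr_suml -rmorph_sum -mpolyE.
by move=> m hm; rewrite hc.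
Qed.

Lemma homog_psi (c : S0) e : psi c = c%:P * 'X^e -> aux_homog e c.
Proof.
move=> E m hm; apply/eqP; have hm' := hm; apply: contraTT hm' => he.
have := congr1 (fun p : {poly S0} => (p`_(auxmdeg m))@_m) E.
rewrite coef_psi mul_polyC coefZ coefXn (negbTE he) mulr0 mcoeff0.
rewrite raddf_sum /= -big_filter.
rewrite (bigD1_seq m) /=; last first.
- by apply: filter_uniq; apply: msupp_uniq.
- by rewrite mem_filter eqxx hm.
rewrite mcoeffZ mcoeffX eqxx mulr1 big1_seq ?addr0.
  by move=> E'; rewrite -mcoeff_eq0 E'.
move=> m' /andP[hm' _]; rewrite mcoeffZ mcoeffX.
by rewrite (negbTE hm') mulr0.
Qed.

End Psi.

Lemma coef_CXn (R : nzRingType) (q : {poly R}) (c : R) k D :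
  (q * (c%:P * 'X^k))`_D = if (k <= D)%N then q`_(D - k) * c else 0.
Proof.
by rewrite mulrA coefMXn coefMC; case: ltnP.
Qed.

Lemma mdeg_prodX n (J : {set 'I_n}) : mdeg (\sum_(j in J) U_(j))%MM = #|J|.
Proof. by rewrite mdeg_sum (eq_bigr (fun _ => 1%N)) ?sum1_card // => j _; rewrite mdeg1. Qed.

Section Gen.
Variables (K : fieldType) (n : nat).
Local Notation S0 := {mpoly K[nA n]}.
Local Notation W0 := {mpoly S0[n]}.

Definition g0 (i : 'I_n) : W0 :=
  \sum_(x : Aidx n | (val x).1 == i) ('X_(enum_rank x))%:MP * \prod_(j in (val x).2) 'X_j.

Lemma hg0 (i : 'I_n) : allm (fun m => mdeg m <= i)%N (g0 i).
Proof.
apply: allm_sum => x /eqP hx; rewrite mul_mpolyC; apply: allmZ.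
rewrite mprodXE; apply: allmX; rewrite mdeg_prodX -hx; exact: (valP x).
Qed.

Definition theta : W0 -> {poly W0} :=
  mmap (map_poly (@mpolyC n S0) \o @psi K n) (fun i : 'I_n => ('X_i)%:P * 'X).
HB.instance Definition _ := GRing.RMorphism.on theta.

Lemma thetaX m : theta 'X_[m] = ('X_[m])%:P * 'X^(mdeg m).
Proof.
rewrite /theta mmapX /mmap1 (eq_bigr (fun i => (('X_i : W0) ^+ m i)%:P * 'X^(m i))).
  by rewrite big_split /= -rmorph_prod -mpolyXE_id prodrXr mdegE.
by move=> i _; rewrite exprMn rmorphXn.
Qed.

Lemma thetaC c : theta c%:MP = map_poly (@mpolyC n S0) (psi c).
Proof. by rewrite /theta mmapC. Qed.

Lemma theta_f0 (i : 'I_n) : theta (fgen g0 i) = (fgen g0 i)%:P * 'X^(i.+1).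
Proof.
rewrite /fgen rmorphD /= rmorphD /= mulrDl; congr (_ + _).
  rewrite /mesym !raddf_sum /= mulr_suml; apply: eq_bigr => J /eqP hJ.
  by rewrite mprodXE thetaX mdeg_prodX hJ.
rewrite /g0 !raddf_sum /= mulr_suml; apply: eq_bigr => x /eqP hx.
rewrite rmorphM /= thetaC mprodXE thetaX psiX enum_rankK rmorphM /= map_polyC /= map_polyXn.
rewrite rmorphM /= mdeg_prodX mulrACA -exprD; congr (_ * 'X^_).
rewrite /auxdeg hx; have := valP x; rewrite /= hx => h; lia.
Qed.

Lemma theta_u (u : {mpoly K[n]}) d : u \is d.-homog ->
  theta (map_mpoly (@mpolyC (nA n) K) u) = (map_mpoly (@mpolyC (nA n) K) u)%:P * 'X^d.
Proof.
move=> hu.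
have -> : map_mpoly (@mpolyC (nA n) K) u = \sum_(m <- msupp u) (u@_m)%:MP *: 'X_[m].
  by rewrite {1}(mpolyE u) raddf_sum; apply: eq_bigr => m _ /=; rewrite map_mpolyZ map_mpolyX.
rewrite rmorph_sum /= rmorph_sum /= mulr_suml big_seq [RHS]big_seq.
apply: eq_bigr => m hm; rewrite -mul_mpolyC rmorphM /= thetaC thetaX.
rewrite psiC map_polyC /= (dhomog_mf hu hm) mulrA -rmorphM; congr (_ * _).
Qed.

Lemma gen_rep (u : {mpoly K[n]}) d (hu : u \is d.-homog) (be : Desc n) :
  exists (c : Desc n -> S0) (h : 'I_n -> W0),
  map_mpoly (@mpolyC (nA n) K) u * 'X_[dmon be] =
     \sum_t c t *: 'X_[dmon t] + \sum_(i < n) h i * fgen g0 i /\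
  forall t, if (mdeg (dmon t) <= d + mdeg (dmon be))%N
            then aux_homog (d + mdeg (dmon be) - mdeg (dmon t)) (c t) else c t = 0.
Proof.
have [c [h E]] := spanned_all (@hg0) (map_mpoly (@mpolyC (nA n) K) u * 'X_[dmon be]).
set D := (d + mdeg (dmon be))%N.
have := congr1 (fun p => (theta p)`_D) E.
rewrite rmorphM /= (theta_u hu) thetaX mulrACA -rmorphM -exprD /= coefMXn ltnn subnn coefC eqxx.
rewrite rmorphD !raddf_sum /= coefD !coef_sum => ->.
exists (fun t => if (mdeg (dmon t) <= D)%N then (psi (c t))`_(D - mdeg (dmon t)) else 0).
exists (fun i : 'I_n => if (i.+1 <= D)%N then (theta (h i))`_(D - i.+1) else 0).
split.
  congr (_ + _).
    apply: eq_bigr => t _.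
    rewrite -mul_mpolyC rmorphM /= thetaC thetaX coef_CXn.
    by case: ifP; rewrite ?scale0r // coef_map /= mul_mpolyC.
  apply: eq_bigr => i _.
  by rewrite rmorphM /= theta_f0 coef_CXn; case: ifP; rewrite ?mul0r.
by move=> t; case: (leqP (mdeg (dmon t)) D) => //= _; apply: aux_homog_coef.
Qed.

End Gen.

Lemma card_Desc n : #|{: Desc n}| = n`!.
Proof.
rewrite card_dep_ffun foldrE big_map big_enum /= fact_prod big_add1 /= big_mkord.
by apply: eq_bigr => i _; rewrite card_ord.
Qed.

Definition ix n (k : 'I_(n`!)) : Desc n := enum_val (cast_ord (esym (card_Desc n)) k).

Lemma ix_bij n : bijective (@ix n).
Proof.
exists (fun t => cast_ord (card_Desc n) (enum_rank t)).
  by move=> k; rewrite /ix enum_valK cast_ordKV.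
by move=> t; rewrite /ix cast_ordK enum_rankK.
Qed.

Lemma sum_ix (V : nmodType) n (F : Desc n -> V) :
  \sum_(t : Desc n) F t = \sum_(k < n`!) F (ix k).
Proof. by rewrite (reindex (@ix n)) //; apply: onW_bij; apply: ix_bij. Qed.

Lemma psum_map (R1 R2 : comNzRingType) (f : {rmorphism R1 -> R2}) N r (A : 'M[R1]_N) :
  principal_minor_sum r (map_mx f A) = f (principal_minor_sum r A).
Proof.
rewrite /principal_minor_sum rmorph_sum; apply: eq_bigr => J _.
by rewrite -map_mxsub det_map_mx.
Qed.

Lemma psum_map_fun (R1 R2 : comNzRingType) (F : {rmorphism R1 -> R2}) (g : R1 -> R2)
  N r (A : 'M[R1]_N) : (forall x, g x = F x) ->
  principal_minor_sum r (map_mx g A) = g (principal_minor_sum r A).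
Proof.
move=> hg; rewrite hg -psum_map; congr (principal_minor_sum r _).
by apply/matrixP => i j; rewrite !mxE hg.
Qed.

Section Spec.
Variables (K : fieldType) (n : nat) (a : Aidx n -> K).
Local Notation S0 := {mpoly K[nA n]}.
Local Notation W0 := {mpoly S0[n]}.
Local Notation PT := {poly {mpoly K[n]}}.

Definition phia : S0 -> PT :=
  mmap (polyC \o @mpolyC n K)
    (fun k : 'I_(nA n) => ((a (enum_val k))%:MP)%:P * 'X^(auxdeg (enum_val k))).
HB.instance Definition _ := GRing.RMorphism.on phia.

Definition Phia : W0 -> PT := mmap phia (fun i : 'I_n => ('X_i)%:P).
HB.instance Definition _ := GRing.RMorphism.on Phia.

Definition aev : {rmorphism S0 -> K} := meval (fun k : 'I_(nA n) => a (enum_val k)).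

Lemma phia_homog (c : S0) e : aux_homog e c ->
  phia c = KT_to_PT n ((aux_eval c a)%:P * 'X^e).
Proof.
move=> hc.
have E : forall p, phia p = (map_poly (@mpolyC n K) \o map_poly aev \o @psi K n) p.
  apply: mpoly_morph_ext => [k|k] /=.
    by rewrite /phia mmapC psiC !map_polyC /= /aev mevalC.
  rewrite /phia mmapX mmap1U psiX !rmorphM /= !map_polyC !map_polyXn /=.
  by rewrite /aev mevalXU.
rewrite E /= (psi_homog hc) !rmorphM /= !map_polyC !map_polyXn /=.
by rewrite /KT_to_PT rmorphM /= map_polyC map_polyXn.
Qed.

Lemma Phia_C c : Phia c%:MP = phia c.
Proof. by rewrite /Phia mmapC. Qed.

Lemma Phia_X m : Phia 'X_[m] = ('X_[m])%:P.
Proof. by rewrite /Phia mmapX /mmap1 mpolyXE_id rmorph_prod; apply: eq_bigr => i _; rewrite rmorphXn. Qed.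

Lemma Phia_f0 (i : 'I_n) : Phia (fgen (@g0 K n) i) = genH a i.
Proof.
rewrite /fgen /genH rmorphD /=; congr (_ + _).
  rewrite /mesym !rmorph_sum /=; apply: eq_bigr => J _.
  by rewrite !mprodXE Phia_X.
rewrite /g0 /gH rmorph_sum /=; apply: eq_bigr => x _.
rewrite rmorphM /= Phia_C mprodXE Phia_X /phia mmapX mmap1U enum_rankK.
rewrite -mprodXE rmorphM /=; ring.
Qed.

Lemma Phia_u (u : {mpoly K[n]}) : Phia (map_mpoly (@mpolyC (nA n) K) u) = u%:P.
Proof.
have E : forall p, (Phia \o map_mpoly (@mpolyC (nA n) K)) p = polyC p.
  apply: mpoly_morph_ext => [k|k] /=.
    by rewrite map_mpolyC Phia_C /phia mmapC.
  by rewrite map_mpolyX Phia_X.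
exact: E.
Qed.

End Spec.

Section W1.
Variables (K : fieldType) (n : nat) (a : Aidx n -> K).
Local Notation W1 := {mpoly {poly K}[n]}.
Local Notation PT := {poly {mpoly K[n]}}.

Definition g1 (i : 'I_n) : W1 :=
  \sum_(x : Aidx n | (val x).1 == i) ((a x)%:P * 'X^(auxdeg x))%:MP * \prod_(j in (val x).2) 'X_j.

Lemma hg1 (i : 'I_n) : allm (fun m => mdeg m <= i)%N (g1 i).
Proof.
apply: allm_sum => x /eqP hx; rewrite mul_mpolyC; apply: allmZ.
rewrite mprodXE; apply: allmX; rewrite mdeg_prodX -hx; exact: (valP x).
Qed.

Definition Phi1 : W1 -> PT := mmap (map_poly (@mpolyC n K)) (fun i : 'I_n => ('X_i)%:P).
HB.instance Definition _ := GRing.RMorphism.on Phi1.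

Lemma Phi1_C c : Phi1 c%:MP = KT_to_PT n c.
Proof. by rewrite /Phi1 mmapC. Qed.

Lemma Phi1_X m : Phi1 'X_[m] = ('X_[m])%:P.
Proof. by rewrite /Phi1 mmapX /mmap1 mpolyXE_id rmorph_prod; apply: eq_bigr => i _; rewrite rmorphXn. Qed.

Lemma Phi1_f (i : 'I_n) : Phi1 (fgen g1 i) = genH a i.
Proof.
rewrite /fgen /genH rmorphD /=; congr (_ + _).
  rewrite /mesym !rmorph_sum /=; apply: eq_bigr => J _.
  by rewrite !mprodXE Phi1_X.
rewrite /g1 /gH rmorph_sum /=; apply: eq_bigr => x _.
rewrite rmorphM /= Phi1_C mprodXE Phi1_X /KT_to_PT rmorphM /= map_polyC map_polyXn /=.
rewrite -mprodXE rmorphM /=; ring.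
Qed.

Lemma Phi1_pre (p : PT) :
  Phi1 (\sum_(i < size p) map_mpoly (@polyC K) (p`_i) * ('X^i)%:MP) = p.
Proof.
have E : forall q, (Phi1 \o map_mpoly (@polyC K)) q = polyC q.
  apply: mpoly_morph_ext => [k|k] /=.
    by rewrite map_mpolyC Phi1_C /KT_to_PT map_polyC.
  by rewrite map_mpolyX Phi1_X.
rewrite rmorph_sum /= -[X in _ = X]coefK poly_def; apply: eq_bigr => i _.
rewrite rmorphM /= Phi1_C (E (p`_i) : Phi1 (map_mpoly _ _) = _) /KT_to_PT map_polyXn.
by rewrite mul_polyC.
Qed.

Lemma D_span (p : PT) : exists c : 'I_(n`!) -> {poly K},
  inEH a (p - \sum_k KT_to_PT n (c k) * ('X_[dmon (ix k)])%:P).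
Proof.
have [c [h E]] := spanned_all hg1 (\sum_(i < size p) map_mpoly (@polyC K) (p`_i) * ('X^i)%:MP).
have := congr1 Phi1 E; rewrite Phi1_pre => ->.
exists (fun k => c (ix k)), (fun i => Phi1 (h i)).
have e1 : forall t, Phi1 (c t *: 'X_[dmon t]) = KT_to_PT n (c t) * ('X_[dmon t])%:P.
  by move=> t; rewrite -mul_mpolyC rmorphM /= Phi1_C Phi1_X.
have e2 : forall i, Phi1 (h i * fgen g1 i) = Phi1 (h i) * genH a i.
  by move=> i; rewrite rmorphM /= Phi1_f.
rewrite rmorphD /= !rmorph_sum /= (eq_bigr _ (fun t _ => e1 t)) (eq_bigr _ (fun i _ => e2 i)).
rewrite sum_ix; ring.
Qed.

End W1.

Lemma psi_psum (K : fieldType) n N r (A : 'M[{mpoly K[nA n]}]_N) :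
  psi (principal_minor_sum r A) = principal_minor_sum r (map_mx (@psi K n) A).
Proof.
have h : forall x, @psi K n x = (@psi K n : {rmorphism _ -> _}) x by [].
exact: (esym (@psum_map_fun _ _ (@psi K n : {rmorphism _ -> _}) (@psi K n) N r A h)).
Qed.

Lemma polyC_psum (R : comNzRingType) N r (A : 'M[R]_N) :
  (principal_minor_sum r A)%:P = principal_minor_sum r (map_mx polyC A).
Proof. by rewrite psum_map. Qed.


Unset Implicit Arguments.

Theorem lemma3p4 (K : fieldType) (n : nat)
    (hchar : forall p : nat, p \in [pchar K] -> (n < p)%N)
    (u : {mpoly K[n]}) (d : nat) (hu : u \is [in K[n], d.-homog])
    (r : nat) (hr : (1 <= r)%N) :
  exists R : {mpoly K[nA n]},
    aux_homog (r * d) R /\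
    forall (a : Aidx n -> K) (b : 'I_(n`!) -> {poly {mpoly K[n]}})
           (M : 'M[{poly K}]_(n`!)),
      is_basis_mod_EH a b -> represents_mult a b u M ->
      principal_minor_sum r M = 'X^(r * d) * (aux_eval R a)%:P.
Proof.
have /fin_all_exists [cf hcf] : forall be : Desc n,
  exists c : Desc n -> {mpoly K[nA n]}, exists h : 'I_n -> {mpoly {mpoly K[nA n]}[n]},
  map_mpoly (@mpolyC (nA n) K) u * 'X_[dmon be] =
     \sum_t c t *: 'X_[dmon t] + \sum_(i < n) h i * fgen (@g0 K n) i /\
  forall t, if (mdeg (dmon t) <= d + mdeg (dmon be))%N
            then aux_homog (d + mdeg (dmon be) - mdeg (dmon t)) (c t) else c t = 0.
  by move=> be; have [c [h H]] := gen_rep hu be; exists c, h.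
have /fin_all_exists [hf hhf] := hcf.
pose dg (k : 'I_(n`!)) := mdeg (dmon (ix k)).
pose Mg : 'M[{mpoly K[nA n]}]_(n`!) := \matrix_(i, j) cf (ix j) (ix i).
have Mprop : forall i j, if (dg i <= d + dg j)%N then aux_homog (d + dg j - dg i) (Mg i j)
                        else Mg i j = 0.
  by move=> i j; rewrite mxE; case: (hhf (ix j)) => _ /(_ (ix i)).
have Xnz : forall k : nat, ('X^k : {poly {mpoly K[nA n]}}) != 0.
  by move=> k; apply: monic_neq0; apply: monicXn.
exists (principal_minor_sum r Mg); split.
  apply: (@homog_psi K n).
  rewrite psi_psum.
  have P := (@psum_diag _ _ (map_mx (@psi K n) Mg) (map_mx polyC Mg) (fun i => 'X^(dg i)) ('X^d) r (fun i => Xnz _)).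
rewrite P; last first.
    move=> i j; rewrite !mxE; have := Mprop i j; rewrite mxE.
    case: leqP => h.
move/psi_homog => ->. rewrite mulrCA -exprD subnKC // exprD. by rewrite mulrA (mulrC _ 'X^d).
    by move=> ->; rewrite rmorph0 !mulr0 mul0r.
by rewrite -polyC_psum -exprM mulnC mulrC.
move=> a b M hb hM.
pose D' (k : 'I_(n`!)) : {poly {mpoly K[n]}} := ('X_[dmon (ix k)])%:P.
pose Ms : 'M[{poly K}]_(n`!) :=
  \matrix_(i, j) ((aux_eval (Mg i j) a)%:P * 'X^(d + dg j - dg i)).
have hMs : represents_mult a D' u Ms.
  move=> j; case: (hhf (ix j)) => E _.
  have := congr1 (Phia a) E.
  rewrite rmorphM /= Phia_u Phia_X rmorphD !rmorph_sum /= => E'.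
  exists (fun i => Phia a (hf (ix j) i)).
  have e1 : forall k, Phia a (cf (ix j) (ix k) *: 'X_[dmon (ix k)]) = KT_to_PT n (Ms k j) * D' k.
    move=> k; rewrite -mul_mpolyC rmorphM /= Phia_C Phia_X mxE; congr (_ * _).
    have := Mprop k j; rewrite mxE; case: leqP => h.
      by move/(phia_homog a).
    move=> ->; rewrite rmorph0 /aux_eval meval0 mul0r.
    by rewrite /KT_to_PT rmorph0.
  have e2 : forall i, Phia a (hf (ix j) i * fgen (@g0 K n) i) = Phia a (hf (ix j) i) * genH a i.
    by move=> i; rewrite rmorphM /= Phia_f0.
  rewrite E' sum_ix (eq_bigr _ (fun k _ => e1 k)) (eq_bigr _ (fun i _ => e2 i)).
  by rewrite addrAC subrr add0r.
rewrite (basis_change r hb (D_span a) hM hMs).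
have P := (@psum_diag _ _ Ms (map_mx (polyC \o aev a) Mg) (fun i => 'X^(dg i)) ('X^d) r
   (fun i => monic_neq0 (monicXn _ _))).
rewrite P; last first.
  move=> i j; rewrite !mxE; have := Mprop i j; rewrite mxE.
  case: leqP => h H.
    by rewrite mulrCA -exprD subnKC // exprD mulrA (mulrC _ 'X^d).
  rewrite H.
  have -> : (polyC \o aev a) 0 = 0 by rewrite /= rmorph0.
  have -> : aux_eval 0 a = 0 by rewrite /aux_eval meval0.
  by rewrite mul0r mulr0 mulr0 mul0r.
rewrite psum_map -exprM mulnC; congr (_ * _).
Qed.
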